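(* Let $S\subseteq M_n$ be a noncommutative graph. Then the minimum defining $\mathcal{H}(S)$ is attained by some $m\in\mathbb{N}$ with $m\leq n^4$ and some $B\in M_m(S)$ with $\sum_{i=1}^m B_{i,i}=I_n$.
   Context: All scalars are complex; $M_n$ denotes complex $n\times n$ matrices. A noncommutative graph is a linear subspace $S\subseteq M_n$ that contains $I_n$ and is closed under conjugate transpose. For a subspace $S\subseteq M_n$, $M_m(S)$ denotes the set of $m\times m$ block matrices $B=[B_{i,j}]_{i,j\in[m]}$ with every block $B_{i,j}\in S$, viewed as elements of $M_{mn}$. The Haemers bound is $\mathcal{H}(S)=\min\{\mathrm{rk}(B):\ m\in\mathbb{N},\ B\in M_m(S),\ \sum_{i=1}^m B_{i,i}=I_n\}$. *)

(* Defs.v *)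
(* Complex numbers are modelled as R[i] = complex R for an
   arbitrary real closed field R (for R the reals this is the field C). *)
From HB Require Import structures.
From mathcomp Require Import all_boot all_order all_algebra.
From mathcomp Require Import complex.
Set Implicit Arguments. Unset Strict Implicit. Unset Printing Implicit Defensive.
Import Order.TTheory GRing.Theory Num.Theory.
Local Open Scope ring_scope.

Definition adjmx (R : rcfType) (n : nat) (A : 'M[R[i]]_n) : 'M[R[i]]_n :=
  (map_mx (fun z => z^*) A)^T.

Definition nc_graph (R : rcfType) (n : nat) (S : {vspace 'M[R[i]]_n}) : Prop :=
  (1%:M \in S) /\ (forall A, A \in S -> adjmx A \in S).

(* the (i,j) block (of size n x n) of an (m n) x (m n) matrix; row index
   (i,k) of the block matrix is mxvec_index i k (a bijection 'I_m*'I_n -> 'I_(m*n)) *)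
Definition mxblk (K : Type) (m n : nat) (B : 'M[K]_(m * n)) (i j : 'I_m) : 'M[K]_n :=
  \matrix_(k < n, l < n) B (mxvec_index i k) (mxvec_index j l).

Definition in_blocks (R : rcfType) (n m : nat) (S : {vspace 'M[R[i]]_n})
  (B : 'M[R[i]]_(m * n)) : Prop :=
  forall i j : 'I_m, mxblk B i j \in S.

Definition haemers_feasible (R : rcfType) (n m : nat) (S : {vspace 'M[R[i]]_n})
  (B : 'M[R[i]]_(m * n)) : Prop :=
  in_blocks S B /\ \sum_(i < m) mxblk B i i = 1%:M.

(* Main.v *)
Require Import Defs.
From HB Require Import structures.
From mathcomp Require Import all_boot all_order all_algebra.
From mathcomp Require Import complex.
From Stdlib Require Import Classical.
Import Order.TTheory GRing.Theory Num.Theory.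
Local Open Scope ring_scope.

Lemma builder (R : rcfType) (n a r : nat) (U : 'I_a -> 'M[R[i]]_(n, r))
  (W : 'I_a -> 'M[R[i]]_(r, n)) :
  exists B : 'M[R[i]]_(a * n),
    (forall k l, mxblk B k l = U k *m W l) /\ (\rank B <= r)%N.
Proof.
pose uv (p : 'I_(a * n)) : 'I_a * 'I_n :=
  enum_val (cast_ord (esym (mxvec_cast a n)) p).
have uvK : forall k j, uv (mxvec_index k j) = (k, j).
  by move=> k j; rewrite /uv /mxvec_index cast_ordK enum_rankK.
pose U' := \matrix_(p, s) U (uv p).1 (uv p).2 s.
pose V' := \matrix_(s, q) W (uv q).1 s (uv q).2.
exists (U' *m V'); split.
  move=> k l; apply/matrixP=> j j'; rewrite !mxE; apply: eq_bigr => s _.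
  by rewrite !mxE !uvK.
exact: leq_trans (mxrankM_maxl _ _) (rank_leq_col _).
Qed.

Lemma exists_min (R : rcfType) (n : nat) (S : {vspace 'M[R[i]]_n}) :
  forall (m : nat) (B : 'M[R[i]]_(m * n)), haemers_feasible S B ->
  exists (m0 : nat) (B0 : 'M[R[i]]_(m0 * n)), haemers_feasible S B0 /\
    forall (m' : nat) (B' : 'M[R[i]]_(m' * n)),
      haemers_feasible S B' -> (\rank B0 <= \rank B')%N.
Proof.
move=> m B fB.
move: {2}(\rank B) (leqnn (\rank B)) => k; elim: k m B fB => [|k IH] m B fB hk.
  exists m, B; split=> // m' B' _; move: hk; rewrite leqn0 => /eqP ->.
  exact: leq0n.
case: (classic (forall (m' : nat) (B' : 'M[R[i]]_(m' * n)),
      haemers_feasible S B' -> (\rank B <= \rank B')%N)) => [H|H].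
  by exists m, B.
move: H => /not_all_ex_not [m' /not_all_ex_not [B' H]].
have [fB' lt] : haemers_feasible S B' /\ ~ (\rank B <= \rank B')%N by tauto.
apply: (IH m' B' fB'); move/negP: lt; rewrite -ltnNge => lt.
by rewrite -ltnS; apply: leq_trans lt hk.
Qed.

Theorem mainTheorem4 (R : rcfType) (n : nat) (S : {vspace 'M[R[i]]_n}) :
  nc_graph S ->
  exists (m : nat) (B : 'M[R[i]]_(m * n)),
    [/\ (m <= n ^ 4)%N, haemers_feasible S B &
        forall (m' : nat) (B' : 'M[R[i]]_(m' * n)),
          haemers_feasible S B' -> (\rank B <= \rank B')%N].
Proof.
move=> [S1 Sadj].
have [B1 [blk1 rk1]] := @builder R n 1 n (fun _ => 1%:M) (fun _ => 1%:M).
have fB1 : haemers_feasible S B1.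
  split; first by move=> i j; rewrite blk1 mul1mx.
  by rewrite big_ord1 blk1 mul1mx.
have [m [B0 [[inB0 sumB0] minB0]]] := @exists_min R n S _ _ fB1.

have rn : (\rank B0 <= n)%N := leq_trans (minB0 _ _ fB1) rk1.
set r := \rank B0 in rn minB0.
pose U := col_base B0; pose V := row_base B0.
pose Ui (i : 'I_m) : 'M[R[i]]_(n, r) := \matrix_(k, s) U (mxvec_index i k) s.
pose Vi (j : 'I_m) : 'M[R[i]]_(r, n) := \matrix_(s, l) V s (mxvec_index j l).
have blk : forall i j, mxblk B0 i j = Ui i *m Vi j.
  move=> i j; apply/matrixP=> k l; rewrite -[in LHS](mulmx_base B0) !mxE.
  by apply: eq_bigr => s _; rewrite !mxE.
pose X := [tuple Ui i | i < m].
pose sp := span X.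
pose b := vbasis sp.
pose a := \dim sp.
pose u (k : 'I_a) := b`_k.
pose W (l : 'I_a) := \sum_i coord b l (Ui i) *: Vi i.
have [B' [blk' rk']] := @builder R n a r u W.
exists a, B'; split.
- have ha : (a <= n * r)%N by rewrite (leq_trans (dimvS (subvf sp))) // dimvf.
  apply: (leq_trans ha); apply: (leq_trans (leq_mul (leqnn n) rn)).
  have key : forall N, (N * N <= N ^ 4)%N.
    by case=> // N; rewrite (_ : 4 = 2 + 2)%N // expnD leq_pmulr // expn_gt0.
  exact: key.
- have XE : forall j : 'I_m, X`_j = Ui j.
    by move=> j; rewrite -(tnth_nth 0 X j) tnth_mktuple.
  have Uin : forall i, Ui i \in sp.
    by move=> i; apply: memv_span; apply/tnthP; exists i; rewrite tnth_mktuple.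
  split.
    move=> k l; rewrite blk'.
    have ukin : u k \in sp.
      by apply: vbasis_mem; apply: mem_nth; rewrite size_tuple.
    have -> : u k = \sum_j coord X j (u k) *: X`_j by apply: coord_span.
    rewrite mulmx_suml; apply: memv_suml => j _; rewrite -scalemxAl; apply: memvZ.
    rewrite /W mulmx_sumr; apply: memv_suml => i _; rewrite -scalemxAr; apply: memvZ.
    by rewrite XE -blk.
  rewrite -sumB0.
  under eq_bigr => k _ do rewrite blk' /W mulmx_sumr.
  rewrite exchange_big; apply: eq_bigr => i _; rewrite blk.
  rewrite [in RHS](coord_vbasis (Uin i)) mulmx_suml; apply: eq_bigr => k _.
  by rewrite -scalemxAr -scalemxAl.
- by move=> m' B'' f; exact: leq_trans rk' (minB0 _ _ f).
Qed.
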